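(* For every $O\in\mathcal P_n$: 1. $\log U(O)=\sum_{\gamma\in\Gamma}\log U_\gamma(O)$. 2. For every $\gamma\in\Gamma$, $\log U_\gamma(O)=0$ if $\mathrm{supp}(O)\not\subseteq\gamma$; and $\log U(O)=0$ if $\mathrm{supp}(O)\not\subseteq\gamma$ for all $\gamma\in\Gamma$.
   Context: $\mathcal P_n=\{I,X,Y,Z\}^{\otimes n}$ (no phases); $[[A,B]]=1$ if $A,B$ commute and $-1$ otherwise. $\Gamma$ is a finite collection of subsets $\gamma\subseteq\{1,\dots,n\}$; each $\gamma$ carries a Pauli channel with error distribution $P_\gamma$ on $\mathcal P_n$ with $P_\gamma(e)=0$ unless $\mathrm{supp}(e)\subseteq\gamma$, and $P_\gamma(I)>1/2$, $P_\gamma(e)>0$ for all non-identity $e$ supported in $\gamma$. Local Pauli eigenvalues: $\Lambda_\gamma(O)=\sum_eP_\gamma(e)[[e,O]]$ (these are positive and depend only on $O_\gamma$, the restriction of $O$ to $\gamma$ with identity elsewhere). The total channel has eigenvalues $\Lambda(O)=\prod_{\gamma}\Lambda_\gamma(O_\gamma)$. Transformed eigenvalues: $\log U(O)=-\frac{2}{4^n}\sum_{O'\in\mathcal P_n}[[O',O]]\log\Lambda(O')$ and $\log U_\gamma(O)=-\frac{2}{4^n}\sum_{O'\in\mathcal P_n}[[O',O]]\log\Lambda_\gamma(O'_\gamma)$. *)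

(* Defs.v *)
From HB Require Import structures.
From mathcomp Require Import all_boot all_order all_algebra.
From mathcomp Require Import all_classical all_reals all_analysis.
Set Implicit Arguments. Unset Strict Implicit. Unset Printing Implicit Defensive.
Import Order.TTheory GRing.Theory Num.Theory.
Local Open Scope ring_scope.

(* Single-qubit Paulis encoded as 'I_4 : 0 = I, 1 = X, 2 = Y, 3 = Z (no phases). *)
Definition pauli (n : nat) := {ffun 'I_n -> 'I_4}.

Definition pauliI (n : nat) : pauli n := [ffun=> ord0].

Definition supp (n : nat) (O : pauli n) : {set 'I_n} := [set i | O i != ord0].

Definition anticomm1 (a b : 'I_4) : bool := [&& a != ord0, b != ord0 & a != b].

(* [[A,B]] = 1 if A,B commute, -1 otherwise  (= (-1)^(# anticommuting sites)) *)
Definition comm_sign (R : realType) (n : nat) (A B : pauli n) : R :=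
  (-1) ^+ #|[set i | anticomm1 (A i) (B i)]|.

Definition restrict (n : nat) (O : pauli n) (g : {set 'I_n}) : pauli n :=
  [ffun i => if i \in g then O i else ord0].

Definition Lambda_loc (R : realType) (n : nat) (Pg : pauli n -> R) (O : pauli n) : R :=
  \sum_(e : pauli n) Pg e * comm_sign R e O.

Definition Lambda_tot (R : realType) (n : nat) (Gam : {set {set 'I_n}})
    (P : {set 'I_n} -> pauli n -> R) (O : pauli n) : R :=
  \prod_(g in Gam) Lambda_loc (P g) (restrict O g).

Definition logU (R : realType) (n : nat) (Gam : {set {set 'I_n}})
    (P : {set 'I_n} -> pauli n -> R) (O : pauli n) : R :=
  - (2 / 4 ^+ n) * \sum_(O' : pauli n) comm_sign R O' O * ln (Lambda_tot Gam P O').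

Definition logU_loc (R : realType) (n : nat) (g : {set 'I_n})
    (Pg : pauli n -> R) (O : pauli n) : R :=
  - (2 / 4 ^+ n) * \sum_(O' : pauli n) comm_sign R O' O * ln (Lambda_loc Pg (restrict O' g)).

Definition good_channel (R : realType) (n : nat) (g : {set 'I_n}) (Pg : pauli n -> R) : Prop :=
  [/\ (forall e, 0 <= Pg e),
      \sum_(e : pauli n) Pg e = 1,
      (forall e, ~~ (supp e \subset g) -> Pg e = 0),
      1 / 2 < Pg (pauliI n) &
      (forall e, e != pauliI n -> supp e \subset g -> 0 < Pg e)].

(* Main.v *)
Require Import Defs.
From HB Require Import structures.
From mathcomp Require Import all_boot all_order all_algebra.
From mathcomp Require Import all_classical all_reals all_analysis.
From mathcomp Require Import lra.
Import Order.TTheory GRing.Theory Num.Theory.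
Local Open Scope ring_scope.

Definition tnat (a x : nat) : nat :=
  if a == 1%N then match x with 0 => 2 | 1 => 3 | 2 => 0 | _ => 1 end
  else match x with 0 => 1 | 1 => 0 | 2 => 3 | _ => 2 end.
Lemma tnat_lt a x : (tnat a x < 4)%N.
Proof. rewrite /tnat; case: (a == 1%N); do 3?case: x => [|x] //. Qed.
Definition tau (a x : 'I_4) : 'I_4 := Ordinal (tnat_lt a x).
Lemma tau_flip (a x : 'I_4) : a != ord0 -> anticomm1 (tau a x) a = ~~ anticomm1 x a.
Proof.
case: a => m Ha. 
do 4?[case: m Ha => [|m] Ha] => //.
all: case: x => k Hk; do 4?[case: k Hk => [|k] Hk] => //.
Qed.
Lemma tauK (a : 'I_4) : involutive (tau a).
Proof.
case: a => m Ha x; apply: val_inj; case: x => k Hk.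
do 4?[case: m Ha => [|m] Ha] => //.
all: do 4?[case: k Hk => [|k] Hk] => //.
Qed.

Section S.
Variable R : realType.
Variable n : nat.

Lemma Lambda_pos (g : {set 'I_n}) (Pg : pauli n -> R) (O : pauli n) :
  good_channel g Pg -> 0 < Lambda_loc Pg O.
Proof.
case=> h0 h1 _ hI _.
rewrite /Lambda_loc (bigD1 (pauliI n)) //=.
have e1 : comm_sign R (pauliI n) O = 1.
  rewrite /comm_sign.
  have -> : [set i | anticomm1 (pauliI n i) (O i)] = finset.set0.
    by apply/setP => i; rewrite !inE ffunE.
  by rewrite cards0 expr0.
rewrite e1 mulr1.
move: h1; rewrite (bigD1 (pauliI n)) //= => h1.
have : \sum_(e | e != pauliI n) - Pg e <= \sum_(e | e != pauliI n) Pg e * comm_sign R e O.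
  apply: ler_sum => e _; rewrite /comm_sign -signr_odd.
  have := h0 e; case: (odd _); rewrite ?expr0 ?expr1 ?mulr1 ?mulrN1 =>  ?; lra.
rewrite sumrN => H.
have : Pg (pauliI n) - \sum_(e | e != pauliI n) Pg e > 0.
  have -> : \sum_(e | e != pauliI n) Pg e = 1 - Pg (pauliI n) by rewrite -h1 addrC addrK.
  lra.
lra.
Qed.

Definition sig (i : 'I_n) (a : 'I_4) (O' : pauli n) : pauli n :=
  [ffun j => if j == i then tau a (O' j) else O' j].

Lemma sigK i a : involutive (sig i a).
Proof.
move=> O'; apply/ffunP => j; rewrite !ffunE.
by case: eqP => // ->; rewrite tauK.
Qed.

Lemma comm_sign_sig i (O O' : pauli n) : O i != ord0 ->
  comm_sign R (sig i (O i) O') O = - comm_sign R O' O.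
Proof.
move=> Hi; rewrite /comm_sign.
set S := [set j | _ ]; set T := [set j | _ ].
have ST : S :\ i = T :\ i.
  by apply/setP => j; rewrite !inE ffunE; case: eqP.
have Si : (i \in S) = ~~ (i \in T) by rewrite !inE ffunE eqxx tau_flip.
rewrite (cardsD1 i S) (cardsD1 i T) ST Si.
case: (i \in T) => /=; rewrite ?exprD ?expr1 ?expr0 ?add0n ?add1n ?exprS; lra.
Qed.

Lemma logU_loc_zero (g : {set 'I_n}) (Pg : pauli n -> R) (O : pauli n) :
  ~~ (supp O \subset g) -> logU_loc g Pg O = 0.
Proof.
case/subsetPn => i; rewrite inE => Hi Hg.
rewrite /logU_loc.
set F := fun O' : pauli n => comm_sign R O' O * ln (Lambda_loc Pg (Defs.restrict O' g)).
have : \sum_(O' : pauli n) F O' = - \sum_(O' : pauli n) F O'.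
  rewrite {1}(reindex_inj (can_inj (sigK i (O i)))) /= -sumrN.
  apply: eq_bigr => O' _; rewrite /F comm_sign_sig // mulNr.
  congr (- (_ * ln (Lambda_loc Pg _))).
  by apply/ffunP => j; rewrite !ffunE; case: eqP => // ->; rewrite (negbTE Hg).
move=> H; have H0 : \sum_(O' : pauli n) F O' = 0 by lra.
by move: H0; rewrite /F => ->; rewrite mulr0.
Qed.

Lemma ln_prod (I : finType) (A : pred I) (f : I -> R) :
  (forall i, A i -> 0 < f i) -> ln (\prod_(i | A i) f i) = \sum_(i | A i) ln (f i).
Proof.
move=> hf.
suff [] : 0 < \prod_(i | A i) f i /\ ln (\prod_(i | A i) f i) = \sum_(i | A i) ln (f i) by [].
elim/big_rec2: _ => [|i y1 y2 Ai [Hp Hl]]; first by rewrite ln1.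
split; first by rewrite mulr_gt0 // hf.
by rewrite lnM ?Hl // posrE ?hf.
Qed.

End S.

Theorem lemma1 (R : realType) (n : nat) (Gam : {set {set 'I_n}})
    (P : {set 'I_n} -> pauli n -> R)
    (hP : forall g, g \in Gam -> good_channel g (P g)) :
  forall O : pauli n,
    logU Gam P O = \sum_(g in Gam) logU_loc g (P g) O /\
    (forall g, g \in Gam -> ~~ (supp O \subset g) -> logU_loc g (P g) O = 0) /\
    ((forall g, g \in Gam -> ~~ (supp O \subset g)) -> logU Gam P O = 0).
Proof.
have part1 : forall O : pauli n,
    logU Gam P O = \sum_(g in Gam) logU_loc g (P g) O.
  move=> O; rewrite /logU /logU_loc -mulr_sumr; congr (_ * _).
  rewrite exchange_big /=; apply: eq_bigr => O' _.
  rewrite -mulr_sumr; congr (_ * _).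
  rewrite /Lambda_tot.
  rewrite ln_prod //.
  by move=> g Hg; apply: Lambda_pos (hP g Hg).
move=> O; split; first exact: part1.
split; first by move=> g _; exact: logU_loc_zero.
move=> H; rewrite part1; apply: big1 => g Hg; exact: logU_loc_zero (H g Hg).
Qed.
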